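(* For any partition $\lambda$ with at most $n$ parts and $x=(x_1,\dots,x_n)\in\mathbb{C}^n$, $$W_{\lambda}(x_1^{-1},\dots,x_n^{-1};q^{-1},p,t^{-1},a^{-1},b^{-1})=a^{-2|\lambda|}b^{2|\lambda|}q^{2|\lambda|}t^{2n(\lambda)-2(n-1)|\lambda|}\,W_{\lambda}(x_1,\dots,x_n;q,p,t,a,b),$$ where $|\lambda|=\sum_i\lambda_i$ and $n(\lambda)=\sum_i(i-1)\lambda_i$.
   Context: Fix $|p|<1$; parameters generic. $E(x)=(x;p)_\infty(p/x;p)_\infty$. For integer $m\ge0$, $(a)_m=(a;q,p)_m=\prod_{k=0}^{m-1}E(aq^k)$, for $m<0$, $(a)_m=1/(aq^m)_{-m}$; for a partition $\lambda$ with $n$ parts $(a)_\lambda=\prod_{i=1}^n(at^{1-i})_{\lambda_i}$; several arguments denote products; integer subscripts denote the single-integer symbol. When $W$ is evaluated with $q,t$ replaced by $q^{-1},t^{-1}$, all these symbols are formed with base $q^{-1}$ and $t^{-1}$. For $n$-part partitions with $\lambda_1\ge\mu_1\ge\dots\ge\lambda_n\ge\mu_n$, $\lambda_{n+1}=\mu_{n+1}=0$, $H_{\lambda/\mu}(q,p,t,b)=\prod_{1\le i<j\le n}\Big\{\frac{(q^{\mu_i-\mu_{j-1}}t^{j-i})_{\mu_{j-1}-\lambda_j}(q^{\lambda_i+\lambda_j}t^{3-j-i}b)_{\mu_{j-1}-\lambda_j}}{(q^{\mu_i-\mu_{j-1}+1}t^{j-i-1})_{\mu_{j-1}-\lambda_j}(q^{\lambda_i+\lambda_j+1}t^{2-j-i}b)_{\mu_{j-1}-\lambda_j}}\frac{(q^{\lambda_i-\mu_{j-1}+1}t^{j-i-1})_{\mu_{j-1}-\lambda_j}}{(q^{\lambda_i-\mu_{j-1}}t^{j-i})_{\mu_{j-1}-\lambda_j}}\Big\}\prod_{1\le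 i<j-1\le n}\frac{(q^{\mu_i+\lambda_j+1}t^{1-j-i}b)_{\mu_{j-1}-\lambda_j}}{(q^{\mu_i+\lambda_j}t^{2-j-i}b)_{\mu_{j-1}-\lambda_j}}$; for $x\in\mathbb{C}$, $W_{\lambda/\mu}(x;q,p,t,a,b)=H_{\lambda/\mu}\frac{(x^{-1},ax)_\lambda(qbx/t,qb/(axt))_\mu}{(x^{-1},ax)_\mu(qbx,qb/(ax))_\lambda}\prod_{i=1}^n\frac{E(bt^{1-2i}q^{2\mu_i})}{E(bt^{1-2i})}\frac{(bt^{1-2i})_{\mu_i+\lambda_{i+1}}}{(bqt^{-2i})_{\mu_i+\lambda_{i+1}}}t^{i(\mu_i-\lambda_{i+1})}$ (zero if the interlacing fails); recursively $W_{\lambda/\mu}(y,z_1,\dots,z_\ell;q,p,t,a,b)=\sum_\nu W_{\lambda/\nu}(yt^{-\ell};q,p,t,at^{2\ell},bt^\ell)W_{\nu/\mu}(z_1,\dots,z_\ell;q,p,t,a,b)$ over $\nu$ with $\lambda_1\ge\nu_1\ge\dots\ge\lambda_n\ge\nu_n\ge0$; $W_\lambda=W_{\lambda/0}$. *)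

(* Defs.v *)
From Stdlib Require Import Reals ZArith List Bool.
From Coquelicot Require Import Coquelicot.
Import ListNotations.
Open Scope bool_scope.

Definition zpow (z : C) (k : Z) : C :=
  match k with
  | Z0 => RtoC 1
  | Zpos n => Cpow z (Pos.to_nat n)
  | Zneg n => Cinv (Cpow z (Pos.to_nat n))
  end.

Definition cprodl (l : list C) : C := fold_right Cmult (RtoC 1) l.
Definition csuml (l : list C) : C := fold_right Cplus (RtoC 0) l.
(** product of f k for k = lo, ..., hi (empty if hi < lo) *)
Definition cprod_range (lo hi : nat) (f : nat -> C) : C :=
  cprodl (map f (seq lo (S hi - lo))).

(** (x;p)_infty = lim_{N -> oo} prod_{k<N} (1 - x p^k), the limit taken
    componentwise (real and imaginary parts); it converges for |p| < 1. *)
Definition qinf_partial (p x : C) (N : nat) : C :=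
  cprodl (map (fun k => Cminus (RtoC 1) (Cmult x (Cpow p k))) (seq 0 N)).
Definition qinf (p x : C) : C :=
  (real (Lim_seq (fun N => fst (qinf_partial p x N))),
   real (Lim_seq (fun N => snd (qinf_partial p x N)))).

Definition Eth (p x : C) : C := Cmult (qinf p x) (qinf p (Cdiv p x)).

Definition pochn (p q a : C) (k : nat) : C :=
  cprodl (map (fun j => Eth p (Cmult a (Cpow q j))) (seq 0 k)).
Definition poch (p q a : C) (m : Z) : C :=
  match m with
  | Z0 => RtoC 1
  | Zpos k => pochn p q a (Pos.to_nat k)
  | Zneg k => Cinv (pochn p q (Cmult a (zpow q (Zneg k))) (Pos.to_nat k))
  end.

(** Partitions with n parts are lists of length n: [lam = [λ_1; ...; λ_n]].
    [part lam i] is λ_i (1-indexed), and is 0 for i > n (so λ_{n+1} = 0). *)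
Definition part (lam : list nat) (i : nat) : Z := Z.of_nat (nth (i - 1) lam 0%nat).

Definition poch_part (p q t a : C) (lam : list nat) : C :=
  cprod_range 1 (length lam)
    (fun i => poch p q (Cmult a (zpow t (1 - Z.of_nat i))) (part lam i)).

Definition interlaces (lam mu : list nat) : bool :=
  Nat.eqb (length lam) (length mu) &&
  forallb (fun i => Z.leb (part mu i) (part lam i) && Z.leb (part lam (S i)) (part mu i))
          (seq 1 (length lam)).

Definition Hcoef (q p t b : C) (lam mu : list nat) : C :=
  let n := length lam in
  let L := part lam in
  let M := part mu in
  let P := poch p q in
  let mon (e1 e2 : Z) (c : C) := Cmult (Cmult (zpow q e1) (zpow t e2)) c in
  Cmult
  (cprod_range 1 n (fun i => cprod_range (S i) n (fun j =>
     let zi := Z.of_nat i in let zj := Z.of_nat j in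
     let m := (M (j - 1)%nat - L j)%Z in
     Cmult
      (Cdiv (Cmult (P (mon (M i - M (j - 1)%nat)%Z (zj - zi)%Z (RtoC 1)) m)
                   (P (mon (L i + L j)%Z (3 - zj - zi)%Z b) m))
            (Cmult (P (mon (M i - M (j - 1)%nat + 1)%Z (zj - zi - 1)%Z (RtoC 1)) m)
                   (P (mon (L i + L j + 1)%Z (2 - zj - zi)%Z b) m)))
      (Cdiv (P (mon (L i - M (j - 1)%nat + 1)%Z (zj - zi - 1)%Z (RtoC 1)) m)
            (P (mon (L i - M (j - 1)%nat)%Z (zj - zi)%Z (RtoC 1)) m)))))
  (* 1 <= i < j-1 <= n, i.e. i+2 <= j <= n+1 *)
  (cprod_range 1 n (fun i => cprod_range (S (S i)) (S n) (fun j =>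
     let zi := Z.of_nat i in let zj := Z.of_nat j in
     let m := (M (j - 1)%nat - L j)%Z in
     Cdiv (P (mon (M i + L j + 1)%Z (1 - zj - zi)%Z b) m)
          (P (mon (M i + L j)%Z (2 - zj - zi)%Z b) m)))).

Definition W1 (x q p t a b : C) (lam mu : list nat) : C :=
  if interlaces lam mu then
    let n := length lam in
    let PP := poch_part p q t in
    Cmult (Cmult (Hcoef q p t b lam mu)
      (Cdiv (Cmult (Cmult (PP (Cinv x) lam) (PP (Cmult a x) lam))
                   (Cmult (PP (Cdiv (Cmult (Cmult q b) x) t) mu)
                          (PP (Cdiv (Cmult q b) (Cmult (Cmult a x) t)) mu)))
            (Cmult (Cmult (PP (Cinv x) mu) (PP (Cmult a x) mu))
                   (Cmult (PP (Cmult (Cmult q b) x) lam)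
                          (PP (Cdiv (Cmult q b) (Cmult a x)) lam)))))
    (cprod_range 1 n (fun i =>
       let zi := Z.of_nat i in
       let bt := Cmult b (zpow t (1 - 2 * zi)) in
       let s := (part mu i + part lam (S i))%Z in
       Cmult (Cmult
         (Cdiv (Eth p (Cmult bt (zpow q (2 * part mu i)))) (Eth p bt))
         (Cdiv (poch p q bt s)
               (poch p q (Cmult (Cmult b q) (zpow t (- 2 * zi))) s)))
         (zpow t (zi * (part mu i - part lam (S i))))))
  else RtoC 0.

Fixpoint interlacing_below (lam : list nat) : list (list nat) :=
  match lam with
  | [] => [[]]
  | l :: rest =>
      let lo := hd 0%nat rest in
      flat_map (fun v => map (cons v) (interlacing_below rest)) (seq lo (S l - lo))
  end.

(** Multivariable W_{λ/μ}(x_1,...,x_l;q,p,t,a,b), defined by the branching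
    recursion.  (For the empty variable list we use the Kronecker delta.) *)
Fixpoint Wm (xs : list C) (q p t a b : C) (lam mu : list nat) {struct xs} : C :=
  match xs with
  | [] => if list_eq_dec Nat.eq_dec lam mu then RtoC 1 else RtoC 0
  | [y] => W1 y q p t a b lam mu
  | y :: zs =>
      let l := Z.of_nat (length zs) in
      csuml (map (fun nu =>
        Cmult (W1 (Cmult y (zpow t (- l))) q p t
                  (Cmult a (zpow t (2 * l))) (Cmult b (zpow t l)) lam nu)
              (Wm zs q p t a b nu mu))
        (interlacing_below lam))
  end.

Definition Wpart (xs : list C) (q p t a b : C) (lam : list nat) : C :=
  Wm xs q p t a b lam (repeat 0%nat (length lam)).

Definition psize (lam : list nat) : Z := Z.of_nat (fold_right Nat.add 0%nat lam).
Definition pn (lam : list nat) : Z :=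
  fold_right Z.add 0%Z
    (map (fun i => (Z.of_nat (i - 1) * part lam i)%Z) (seq 1 (length lam))).

Definition is_partition (lam : list nat) : Prop :=
  forall i, (1 <= i)%nat -> (i < length lam)%nat -> (part lam (S i) <= part lam i)%Z.

Definition generic (p q t a b : C) (xs : list C) : Prop :=
  forall (i j k l m : Z) (e : list Z),
    length e = length xs ->
    Cmult (Cmult (Cmult (Cmult (zpow q i) (zpow t j)) (zpow a k)) (zpow b l))
          (cprodl (map (fun xe : C * Z => let (x, z) := xe in zpow x z) (combine xs e)))
    = zpow p m ->
    i = 0%Z /\ j = 0%Z /\ k = 0%Z /\ l = 0%Z /\ List.Forall (fun z => z = 0%Z) e.

(* Main.v *)
Require Import Defs.
From Stdlib Require Import Reals ZArith List Lra Lia.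
From Coquelicot Require Import Coquelicot.
Import ListNotations.

Local Open Scope C_scope.

Lemma Cinv0 : Cinv (RtoC 0) = RtoC 0.
Proof. unfold Cinv; simpl. unfold Rdiv. apply injective_projections; simpl; ring. Qed.

Lemma Cinv1 : Cinv (RtoC 1) = RtoC 1.
Proof. field. Qed.

Lemma Cmult_eq0 : forall x y : C, x * y = 0 -> x = 0 \/ y = 0.
Proof.
  intros x y H. destruct (Ceq_dec x 0) as [Hx|Hx]; [now left|right].
  apply (f_equal (Cmult (Cinv x))) in H. rewrite Cmult_assoc, Cinv_l in H by auto.
  rewrite Cmult_1_l in H. rewrite H. ring.
Qed.

Lemma Cinv_mult : forall x y : C, Cinv (x * y) = Cinv x * Cinv y.
Proof.
  intros x y. destruct (Ceq_dec x 0) as [Hx|Hx].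
  { subst. rewrite Cmult_0_l, Cinv0. ring. }
  destruct (Ceq_dec y 0) as [Hy|Hy].
  { subst. rewrite Cmult_0_r, Cinv0. ring. }
  field. auto.
Qed.

Lemma Cinv_nz : forall x : C, x <> 0 -> Cinv x <> 0.
Proof.
  intros x Hx H. apply (f_equal (Cmult x)) in H. rewrite Cinv_r in H by auto.
  rewrite Cmult_0_r in H. apply C1_nz; auto.
Qed.

Lemma Cinv_inv : forall x : C, Cinv (Cinv x) = x.
Proof.
  intros x. destruct (Ceq_dec x 0) as [Hx|Hx].
  { subst. rewrite !Cinv0. auto. }
  assert (Cinv x <> 0) by (apply Cinv_nz; auto).
  transitivity (Cinv (Cinv x) * (Cinv x * x)). rewrite Cinv_l, Cmult_1_r; auto.
  rewrite Cmult_assoc, Cinv_l, Cmult_1_l; auto.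
Qed.

Lemma Cmult_nz : forall x y : C, x <> 0 -> y <> 0 -> x * y <> 0.
Proof. intros x y Hx Hy H. destruct (Cmult_eq0 _ _ H); auto. Qed.

Lemma zpow_of_nat : forall (z : C) n, zpow z (Z.of_nat n) = Cpow z n.
Proof.
  intros z [|n]; simpl; auto. rewrite SuccNat2Pos.id_succ. auto.
Qed.

Lemma zpow_neg_of_nat : forall (z : C) n, zpow z (- Z.of_nat n) = Cinv (Cpow z n).
Proof.
  intros z [|n]; simpl. rewrite Cinv1; auto. rewrite SuccNat2Pos.id_succ. auto.
Qed.

Lemma zpow_cases : forall k : Z, exists n, k = Z.of_nat n \/ k = (- Z.of_nat n)%Z.
Proof.
  intros k. destruct (Z_le_gt_dec 0 k).
  - exists (Z.to_nat k). left. lia.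
  - exists (Z.to_nat (-k)). right. lia.
Qed.

Lemma zpow_succ : forall (z : C) k, z <> 0 -> zpow z (k + 1) = zpow z k * z.
Proof.
  intros z k Hz. destruct (zpow_cases k) as [n [->| ->]].
  - replace (Z.of_nat n + 1)%Z with (Z.of_nat (S n)) by lia.
    rewrite !zpow_of_nat. simpl. ring.
  - destruct n as [|n].
    + simpl. ring.
    + replace (- Z.of_nat (S n) + 1)%Z with (- Z.of_nat n)%Z by lia.
      rewrite !zpow_neg_of_nat. simpl. field. split; auto. apply Cpow_nz; auto. 

Qed.

Lemma zpow_pred : forall (z : C) k, z <> 0 -> zpow z (k - 1) = zpow z k * Cinv z.
Proof.
  intros z k Hz. replace (zpow z k) with (zpow z ((k - 1) + 1)) by (f_equal; lia).
  rewrite zpow_succ by auto. field. auto.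
Qed.

Lemma zpow_add : forall (z : C) m n, z <> 0 -> zpow z (m + n) = zpow z m * zpow z n.
Proof.
  intros z m n Hz. induction n using Z.peano_ind.
  - rewrite Z.add_0_r. simpl. ring.
  - replace (m + Z.succ n)%Z with ((m + n) + 1)%Z by lia.
    replace (Z.succ n) with (n + 1)%Z by lia.
    rewrite !zpow_succ, IHn by auto. ring.
  - replace (m + Z.pred n)%Z with ((m + n) - 1)%Z by lia.
    replace (Z.pred n) with (n - 1)%Z by lia.
    rewrite !zpow_pred, IHn by auto. ring.
Qed.

Lemma zpow_nz : forall (z : C) k, z <> 0 -> zpow z k <> 0.
Proof.
  intros z k Hz. destruct (zpow_cases k) as [n [->| ->]].
  - rewrite zpow_of_nat. apply Cpow_nz; auto.
  - rewrite zpow_neg_of_nat. apply Cinv_nz, Cpow_nz; auto.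
Qed.

Lemma zpow_opp : forall (z : C) k, z <> 0 -> zpow z (- k) = Cinv (zpow z k).
Proof.
  intros z k Hz. pose proof (zpow_add z k (-k) Hz) as H.
  rewrite Z.add_opp_diag_r in H. simpl in H.
  pose proof (zpow_nz z k Hz).
  apply (f_equal (Cmult (Cinv (zpow z k)))) in H.
  rewrite Cmult_assoc, Cinv_l, Cmult_1_l, Cmult_1_r in H by auto. auto.
Qed.

Lemma zpow_0 : forall z : C, zpow z 0 = 1.
Proof. auto. Qed.

Lemma zpow_mul_base : forall (z w : C) k, z <> 0 -> w <> 0 -> zpow (z * w) k = zpow z k * zpow w k.
Proof.
  intros z w k Hz Hw. destruct (zpow_cases k) as [n [->| ->]].
  - rewrite !zpow_of_nat. apply Cpow_mult_l.
  - rewrite !zpow_neg_of_nat, Cpow_mult_l, Cinv_mult. auto.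
Qed.

Lemma zpow_inv_base : forall (z : C) k, z <> 0 -> zpow (Cinv z) k = Cinv (zpow z k).
Proof.
  intros z k Hz. destruct (zpow_cases k) as [n [->| ->]].
  - rewrite !zpow_of_nat. apply Cpow_inv; auto.
  - rewrite !zpow_neg_of_nat, Cpow_inv by auto. auto.
Qed.

Lemma zpow_zpow : forall (z : C) k e, z <> 0 -> zpow (zpow z k) e = zpow z (k * e).
Proof.
  intros z k e Hz. pose proof (zpow_nz z k Hz) as Hk.
  induction e using Z.peano_ind.
  - rewrite Z.mul_0_r. auto.
  - replace (Z.succ e) with (e + 1)%Z by lia. rewrite zpow_succ, IHe by auto.
    replace (k * (e+1))%Z with (k * e + k)%Z by ring. rewrite zpow_add by auto. auto.
  - replace (Z.pred e) with (e - 1)%Z by lia. rewrite zpow_pred, IHe by auto.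
    replace (k * (e-1))%Z with (k * e + - k)%Z by ring. rewrite zpow_add, zpow_opp by auto. auto.
Qed.

Lemma zpow_one_base : forall k, zpow 1 k = 1.
Proof.
  intros k. destruct (zpow_cases k) as [n [->| ->]].
  - rewrite zpow_of_nat, Cpow_1_l. auto.
  - rewrite zpow_neg_of_nat, Cpow_1_l, Cinv1. auto.
Qed.

Lemma geom_conv (u : nat -> R) (K r : R) : (0 <= r < 1)%R ->
  (forall k, Rabs (u (S k) - u k) <= K * r ^ k)%R -> exists l, is_lim_seq u (Finite l).
Proof.
  intros Hr Hd.
  set (d := fun k => (u (S k) - u k)%R).
  assert (Hs : ex_series d).
  { apply (ex_series_le d (fun k => K * r ^ k)%R).
    - intros n. apply Hd.
    - apply (ex_series_scal_l (V := R_NormedModule) K (fun k => r ^ k)%R).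
      apply ex_series_geom. rewrite Rabs_pos_eq; lra. }
  destruct Hs as [L HL].
  exists (u 0%nat + L)%R.
  apply is_lim_seq_incr_1.
  apply is_lim_seq_ext with (fun N => u 0%nat + sum_n d N)%R.
  { intros N. induction N.
    - rewrite sum_O. unfold d. ring.
    - rewrite sum_Sn. unfold plus; simpl. rewrite <- Rplus_assoc, IHN. unfold d. ring. }
  apply (is_lim_seq_plus' (fun _ => u 0%nat) (sum_n d) (u 0%nat) L).
  - apply is_lim_seq_const.
  - exact HL.
Qed.

Local Open Scope C_scope.

Lemma cprodl_app : forall l1 l2, cprodl (l1 ++ l2) = cprodl l1 * cprodl l2.
Proof.
  induction l1; intros; simpl. ring. rewrite IHl1. ring.
Qed.

Lemma qinf_partial_S_r : forall p y N,
  qinf_partial p y (S N) = qinf_partial p y N * (1 - y * Cpow p N).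
Proof.
  intros. unfold qinf_partial. rewrite seq_S, map_app, cprodl_app. simpl. ring.
Qed.

Lemma qinf_partial_S_l : forall p y N,
  qinf_partial p y (S N) = (1 - y) * qinf_partial p (p * y) N.
Proof.
  intros. unfold qinf_partial. simpl seq. simpl map. simpl cprodl.
  rewrite <- seq_shift, map_map. f_equal. ring.
  f_equal. apply map_ext. intros k. simpl. ring.
Qed.

Lemma qinf_partial_bound : forall p y N, (Cmod p < 1)%R ->
  (Cmod (qinf_partial p y N) <= exp (Cmod y * (1 - Cmod p ^ N) / (1 - Cmod p)))%R.
Proof.
  intros p y N Hp. pose proof (Cmod_ge_0 p). pose proof (Cmod_ge_0 y).
  induction N.
  - unfold qinf_partial. simpl. rewrite Cmod_1.
    replace (Cmod y * (1 - 1) / (1 - Cmod p))%R with 0%R by (field; lra).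
    rewrite exp_0. lra.
  - rewrite qinf_partial_S_r, Cmod_mult.
    assert (H1 : (Cmod (1 - y * Cpow p N) <= 1 + Cmod y * Cmod p ^ N)%R).
    { unfold Cminus. eapply Rle_trans. apply Cmod_triangle.
      rewrite Cmod_1, Cmod_opp, Cmod_mult, Cmod_pow. lra. }
    eapply Rle_trans.
    apply Rmult_le_compat. apply Cmod_ge_0. apply Cmod_ge_0. exact IHN. exact H1.
    eapply Rle_trans. apply Rmult_le_compat_l. left; apply exp_pos.
    apply exp_ineq1_le.
    rewrite <- exp_plus. right. f_equal. simpl. field. lra.
Qed.

Lemma qinf_partial_bound2 : forall p y N, (Cmod p < 1)%R ->
  (Cmod (qinf_partial p y N) <= exp (Cmod y / (1 - Cmod p)))%R.
Proof.
  intros p y N Hp. pose proof (Cmod_ge_0 p). pose proof (Cmod_ge_0 y).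
  eapply Rle_trans. apply qinf_partial_bound; auto.
  assert (Hle : (Cmod y * (1 - Cmod p ^ N) / (1 - Cmod p) <= Cmod y / (1 - Cmod p))%R).
  { unfold Rdiv. apply Rmult_le_compat_r.
    - left. apply Rinv_0_lt_compat. lra.
    - pose proof (pow_le (Cmod p) N H). nra. }
  destruct Hle as [Hlt|Heq]. left; apply exp_increasing; auto. rewrite Heq; lra.
Qed.

Lemma qinf_partial_conv : forall p y, (Cmod p < 1)%R ->
  (exists l, is_lim_seq (fun N => fst (qinf_partial p y N)) (Finite l)) /\ (exists l, is_lim_seq (fun N => snd (qinf_partial p y N)) (Finite l)).
Proof.
  intros p y Hp. pose proof (Cmod_ge_0 p).
  set (B := exp (Cmod y / (1 - Cmod p))).
  assert (Hd : forall k, (Cmod (qinf_partial p y (S k) - qinf_partial p y k) <= (B * Cmod y) * Cmod p ^ k)%R).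
  { intros k. rewrite qinf_partial_S_r.
    replace (qinf_partial p y k * (1 - y * Cpow p k) - qinf_partial p y k)
      with (qinf_partial p y k * (- (y * Cpow p k))) by ring.
    rewrite Cmod_mult, Cmod_opp, Cmod_mult, Cmod_pow.
    pose proof (qinf_partial_bound2 p y k Hp). fold B in H0.
    pose proof (Cmod_ge_0 y). pose proof (pow_le (Cmod p) k H).
    rewrite <- Rmult_assoc. apply Rmult_le_compat_r; auto.
    apply Rmult_le_compat_r; auto. }
  split.
  - apply (geom_conv _ (B * Cmod y) (Cmod p)). lra.
    intros k. eapply Rle_trans; [|apply Hd].
    eapply Rle_trans; [|apply Rmax_Cmod]. 
    replace (fst (qinf_partial p y (S k) - qinf_partial p y k))
      with (fst (qinf_partial p y (S k)) - fst (qinf_partial p y k))%R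
      by (destruct (qinf_partial p y (S k)), (qinf_partial p y k); simpl; ring).
    apply Rmax_l.
  - apply (geom_conv _ (B * Cmod y) (Cmod p)). lra.
    intros k. eapply Rle_trans; [|apply Hd].
    eapply Rle_trans; [|apply Rmax_Cmod]. 
    replace (snd (qinf_partial p y (S k) - qinf_partial p y k))
      with (snd (qinf_partial p y (S k)) - snd (qinf_partial p y k))%R
      by (destruct (qinf_partial p y (S k)), (qinf_partial p y k); simpl; ring).
    apply Rmax_r.
Qed.

Local Open Scope C_scope.
Lemma qinf_shift : forall p y, (Cmod p < 1)%R -> qinf p y = (1 - y) * qinf p (p * y).
Proof.
  intros p y Hp.
  destruct (qinf_partial_conv p (p * y) Hp) as [[lf Hf] [ls Hs]].
  assert (E1 : Lim_seq (fun N => fst (qinf_partial p y N)) = Finite (fst (1 - y)%C * lf - snd (1 - y)%C * ls)%R).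
  { rewrite <- Lim_seq_incr_1. apply is_lim_seq_unique.
    apply is_lim_seq_ext with (fun N => fst (1 - y)%C * fst (qinf_partial p (p * y) N) - snd (1 - y)%C * snd (qinf_partial p (p * y) N))%R.
    { intros N. rewrite qinf_partial_S_l. reflexivity. }
    apply (is_lim_seq_minus' _ _ (fst (1 - y)%C * lf) (snd (1 - y)%C * ls)).
    exact (is_lim_seq_scal_l _ _ _ Hf) || exact (is_lim_seq_scal_l _ _ _ Hs). exact (is_lim_seq_scal_l _ _ _ Hf) || exact (is_lim_seq_scal_l _ _ _ Hs). }
  assert (E2 : Lim_seq (fun N => snd (qinf_partial p y N)) = Finite (fst (1 - y)%C * ls + snd (1 - y)%C * lf)%R).
  { rewrite <- Lim_seq_incr_1. apply is_lim_seq_unique.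
    apply is_lim_seq_ext with (fun N => fst (1 - y)%C * snd (qinf_partial p (p * y) N) + snd (1 - y)%C * fst (qinf_partial p (p * y) N))%R.
    { intros N. rewrite qinf_partial_S_l. reflexivity. }
    apply (is_lim_seq_plus' _ _ (fst (1 - y)%C * ls) (snd (1 - y)%C * lf)).
    exact (is_lim_seq_scal_l _ _ _ Hf) || exact (is_lim_seq_scal_l _ _ _ Hs). exact (is_lim_seq_scal_l _ _ _ Hf) || exact (is_lim_seq_scal_l _ _ _ Hs). }
  unfold qinf at 1. rewrite E1, E2. unfold qinf.
  rewrite (is_lim_seq_unique _ _ Hf), (is_lim_seq_unique _ _ Hs). simpl.
  reflexivity.
Qed.

Lemma Eth_inv : forall p X : C, (Cmod p < 1)%R -> X <> 0 -> Eth p (Cinv X) = - Cinv X * Eth p X.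
Proof.
  intros p X Hp HX. unfold Eth, Cdiv. rewrite Cinv_inv.
  rewrite (qinf_shift p (Cinv X)) by auto. rewrite (qinf_shift p X) by auto.
  field. auto.
Qed.

Definition Tf (q A : C) (m : Z) : C :=
  zpow (-1) m * zpow A (- m) * zpow q (- (m * (m - 1) / 2)).

Lemma tri : forall m : Z, (m * (m - 1) = 2 * (m * (m - 1) / 2) /\ (m + 1) * m / 2 = m * (m - 1) / 2 + m)%Z.
Proof.
  intros m. destruct (Zeven_odd_dec m) as [He|Ho].
  - apply Zeven_ex in He. destruct He as [j ->].
    replace (2 * j * (2 * j - 1))%Z with ((j * (2 * j - 1)) * 2)%Z by ring.
    rewrite Z.div_mul by lia.
    replace ((2 * j + 1) * (2 * j))%Z with ((j * (2 * j + 1)) * 2)%Z by ring.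
    rewrite Z.div_mul by lia. split; ring.
  - apply Zodd_ex in Ho. destruct Ho as [j ->].
    replace ((2 * j + 1) * (2 * j + 1 - 1))%Z with ((j * (2 * j + 1)) * 2)%Z by ring.
    rewrite Z.div_mul by lia.
    replace ((2 * j + 1 + 1) * (2 * j + 1))%Z with (((j + 1) * (2 * j + 1)) * 2)%Z by ring.
    rewrite Z.div_mul by lia. split; ring.
Qed.

Lemma Cm1_nz : (-1 : C) <> 0.
Proof. intro H. apply C1_nz. replace (RtoC 1) with (- (-1 : C)) by ring. rewrite H. ring. Qed.

Lemma Cpow_Sr : forall (c : C) n, Cpow c (S n) = Cpow c n * c.
Proof. intros. rewrite Cpow_S. ring. Qed.

Lemma pochn_S : forall p q A k, pochn p q A (S k) = pochn p q A k * Eth p (A * Cpow q k).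
Proof.
  intros. unfold pochn. rewrite seq_S, map_app, cprodl_app. simpl. ring.
Qed.

Lemma Tf_S : forall (q A : C) (k : nat), q <> 0 -> A <> 0 ->
  Tf q A (Z.of_nat (S k)) = Tf q A (Z.of_nat k) * (- Cinv (A * Cpow q k)).
Proof.
  intros q A k Hq HA. unfold Tf.
  replace (Z.of_nat (S k)) with (Z.of_nat k + 1)%Z by lia.
  replace (- (Z.of_nat k + 1))%Z with (- Z.of_nat k + - 1)%Z by ring.
  destruct (tri (Z.of_nat k)) as [_ H2].
  replace (- ((Z.of_nat k + 1) * (Z.of_nat k + 1 - 1) / 2))%Z
    with (- (Z.of_nat k * (Z.of_nat k - 1) / 2) + - Z.of_nat k)%Z
    by (rewrite Z.add_simpl_r, H2; ring).
  rewrite zpow_succ by apply Cm1_nz.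
  rewrite !zpow_add by auto. rewrite (zpow_opp q (Z.of_nat k)), zpow_of_nat by auto.
  simpl (zpow A (-1)). rewrite !Cinv_mult, Cinv1, !zpow_of_nat. simpl. ring.
Qed.

Lemma pochn_inv : forall (p q A : C) k, (Cmod p < 1)%R -> q <> 0 -> A <> 0 ->
  pochn p (Cinv q) (Cinv A) k = Tf q A (Z.of_nat k) * pochn p q A k.
Proof.
  intros p q A k Hp Hq HA. induction k.
  - unfold pochn, Tf. simpl. ring.
  - rewrite !pochn_S, IHk, Tf_S by auto.
    rewrite Cpow_inv, <- Cinv_mult by auto.
    rewrite Eth_inv by (auto; apply Cmult_nz; auto; apply Cpow_nz; auto).
    ring.
Qed.

Lemma Tf_scale : forall (q c A : C) m, c <> 0 -> A <> 0 ->
  Tf q (c * A) m = zpow c (- m) * Tf q A m.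
Proof. intros. unfold Tf. rewrite zpow_mul_base by auto. ring. Qed.

Lemma Tf_nz : forall (q A : C) m, q <> 0 -> A <> 0 -> Tf q A m <> 0.
Proof.
  intros. unfold Tf. repeat apply Cmult_nz; apply zpow_nz; auto. apply Cm1_nz.
Qed.

Lemma Tf_neg : forall (q A : C) m, q <> 0 -> A <> 0 ->
  Tf q (A * zpow q m) (- m) * Tf q A m = 1.
Proof.
  intros q A m Hq HA. unfold Tf.
  destruct (tri m) as [H1 H2].
  set (h := (m * (m - 1) / 2)%Z) in *.
  replace (- (- m * (- m - 1) / 2))%Z with (- (h + m))%Z
    by (rewrite <- H2; f_equal; f_equal; ring).
  rewrite Z.opp_involutive, zpow_mul_base, zpow_zpow by (auto; apply zpow_nz; auto).
  replace (m * m)%Z with ((h + m) + h)%Z by lia.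
  rewrite zpow_add by auto.
  rewrite !zpow_opp by (auto; apply Cm1_nz).
  pose proof (zpow_nz (-1) m Cm1_nz). pose proof (zpow_nz A m HA).
  pose proof (zpow_nz q (h + m) Hq). pose proof (zpow_nz q h Hq).
  field. repeat split; auto.
Qed.

Lemma Cinv_from_prod : forall x y : C, x * y = 1 -> Cinv x = y.
Proof.
  intros x y H. assert (Hx : x <> 0).
  { intro Hx. subst. rewrite Cmult_0_l in H. apply C1_nz. auto. }
  rewrite <- (Cmult_1_r (Cinv x)), <- H. rewrite Cmult_assoc, Cinv_l, Cmult_1_l; auto.
Qed.

Lemma poch_inv : forall (p q A : C) m, (Cmod p < 1)%R -> q <> 0 -> A <> 0 ->
  poch p (Cinv q) (Cinv A) m = Tf q A m * poch p q A m.
Proof.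
  intros p q A m Hp Hq HA. destruct m as [|k|k].
  - unfold poch, Tf. simpl. ring.
  - unfold poch. rewrite pochn_inv, positive_nat_Z by auto. auto.
  - unfold poch.
    replace (Cinv A * zpow (Cinv q) (Zneg k)) with (Cinv (A * zpow q (Zneg k)))
      by (rewrite Cinv_mult, zpow_inv_base; auto).
    rewrite pochn_inv, Cinv_mult, positive_nat_Z by (auto; apply Cmult_nz; auto; apply zpow_nz; auto).
    f_equal. apply Cinv_from_prod. apply (Tf_neg q A (Zneg k)); auto.
Qed.

Definition zsum (lo hi : nat) (f : nat -> Z) : Z :=
  fold_right Z.add 0%Z (map f (seq lo (S hi - lo))).

Lemma cprodl_map_mult : forall (A : Type) (f g : A -> C) l,
  cprodl (map (fun i => f i * g i) l) = cprodl (map f l) * cprodl (map g l).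
Proof. induction l; simpl. ring. rewrite IHl. ring. Qed.

Lemma cprod_range_mult : forall lo hi f g,
  cprod_range lo hi (fun i => f i * g i) = cprod_range lo hi f * cprod_range lo hi g.
Proof. intros. unfold cprod_range. apply cprodl_map_mult. Qed.

Lemma cprod_range_ext : forall lo hi f g, (forall i, f i = g i) ->
  cprod_range lo hi f = cprod_range lo hi g.
Proof. intros. unfold cprod_range. f_equal. apply map_ext. auto. Qed.

Lemma cprodl_map_zpow : forall (z : C) (f : nat -> Z) l, z <> 0 ->
  cprodl (map (fun i => zpow z (f i)) l) = zpow z (fold_right Z.add 0%Z (map f l)).
Proof. induction l; intros; simpl. auto. rewrite IHl, zpow_add; auto. Qed.

Lemma cprod_range_zpow : forall (z : C) lo hi f, z <> 0 ->
  cprod_range lo hi (fun i => zpow z (f i)) = zpow z (zsum lo hi f).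
Proof. intros. unfold cprod_range, zsum. apply cprodl_map_zpow; auto. Qed.

Definition Mono (q t a b : C) (e1 e2 e3 e4 : Z) : C :=
  zpow q e1 * zpow t e2 * zpow a e3 * zpow b e4.

Lemma Mono_mult : forall (q t a b : C) e1 e2 e3 e4 f1 f2 f3 f4,
  q <> 0 -> t <> 0 -> a <> 0 -> b <> 0 ->
  Mono q t a b e1 e2 e3 e4 * Mono q t a b f1 f2 f3 f4 =
  Mono q t a b (e1 + f1) (e2 + f2) (e3 + f3) (e4 + f4).
Proof. intros. unfold Mono. rewrite !zpow_add by auto. ring. Qed.

Lemma cprod_range_Mono : forall (q t a b : C) lo hi f1 f2 f3 f4,
  q <> 0 -> t <> 0 -> a <> 0 -> b <> 0 ->
  cprod_range lo hi (fun i => Mono q t a b (f1 i) (f2 i) (f3 i) (f4 i)) =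
  Mono q t a b (zsum lo hi f1) (zsum lo hi f2) (zsum lo hi f3) (zsum lo hi f4).
Proof.
  intros. unfold Mono.
  rewrite !cprod_range_mult, !cprod_range_zpow by auto. auto.
Qed.

Lemma Mono_nz : forall (q t a b : C) e1 e2 e3 e4,
  q <> 0 -> t <> 0 -> a <> 0 -> b <> 0 -> Mono q t a b e1 e2 e3 e4 <> 0.
Proof. intros. unfold Mono. repeat apply Cmult_nz; apply zpow_nz; auto. Qed.

Ltac nz := repeat first [ apply Cmult_nz | apply zpow_nz | apply Cinv_nz | apply Cpow_nz
                        | apply Tf_nz | apply Mono_nz | apply C1_nz | apply Cm1_nz ]; auto.

Definition H1 (q p t b : C) (L M : nat -> Z) (i j : nat) : C :=
  let P := poch p q in
  let mon (e1 e2 : Z) (c : C) := Cmult (Cmult (zpow q e1) (zpow t e2)) c in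
     let zi := Z.of_nat i in let zj := Z.of_nat j in
     let m := (M (j - 1)%nat - L j)%Z in
     Cmult
      (Cdiv (Cmult (P (mon (M i - M (j - 1)%nat)%Z (zj - zi)%Z (RtoC 1)) m)
                   (P (mon (L i + L j)%Z (3 - zj - zi)%Z b) m))
            (Cmult (P (mon (M i - M (j - 1)%nat + 1)%Z (zj - zi - 1)%Z (RtoC 1)) m)
                   (P (mon (L i + L j + 1)%Z (2 - zj - zi)%Z b) m)))
      (Cdiv (P (mon (L i - M (j - 1)%nat + 1)%Z (zj - zi - 1)%Z (RtoC 1)) m)
            (P (mon (L i - M (j - 1)%nat)%Z (zj - zi)%Z (RtoC 1)) m)).

Definition H2 (q p t b : C) (L M : nat -> Z) (i j : nat) : C :=
  let P := poch p q in
  let mon (e1 e2 : Z) (c : C) := Cmult (Cmult (zpow q e1) (zpow t e2)) c in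
     let zi := Z.of_nat i in let zj := Z.of_nat j in
     let m := (M (j - 1)%nat - L j)%Z in
     Cdiv (P (mon (M i + L j + 1)%Z (1 - zj - zi)%Z b) m)
          (P (mon (M i + L j)%Z (2 - zj - zi)%Z b) m).

Lemma Hcoef_eq : forall q p t b lam mu,
  Hcoef q p t b lam mu =
  Cmult (cprod_range 1 (length lam) (fun i => cprod_range (S i) (length lam) (fun j =>
            H1 q p t b (part lam) (part mu) i j)))
        (cprod_range 1 (length lam) (fun i => cprod_range (S (S i)) (S (length lam)) (fun j =>
            H2 q p t b (part lam) (part mu) i j))).
Proof. reflexivity. Qed.

Lemma mon_inv1 : forall (q t : C) e1 e2, q <> 0 -> t <> 0 ->
  Cmult (Cmult (zpow (Cinv q) e1) (zpow (Cinv t) e2)) (RtoC 1) =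
  Cinv (Cmult (Cmult (zpow q e1) (zpow t e2)) (RtoC 1)).
Proof. intros. rewrite !zpow_inv_base, !Cinv_mult, Cinv1 by auto. auto. Qed.

Lemma mon_invb : forall (q t b : C) e1 e2, q <> 0 -> t <> 0 ->
  Cmult (Cmult (zpow (Cinv q) e1) (zpow (Cinv t) e2)) (Cinv b) =
  Cinv (Cmult (Cmult (zpow q e1) (zpow t e2)) b).
Proof. intros. rewrite !zpow_inv_base, !Cinv_mult by auto. auto. Qed.

Lemma mon_shift : forall (q t c : C) e1 e2 f1 f2, q <> 0 -> t <> 0 ->
  f1 = (e1 + 1)%Z -> f2 = (e2 - 1)%Z ->
  Cmult (Cmult (zpow q f1) (zpow t f2)) c = (q * Cinv t) * Cmult (Cmult (zpow q e1) (zpow t e2)) c.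
Proof. intros. subst. rewrite zpow_succ, zpow_pred by auto. ring. Qed.

Ltac gen_inv_poch :=
  repeat match goal with |- context [Cinv (poch ?a ?b ?c ?d)] =>
    generalize (Cinv (poch a b c d)); intro end.

Lemma H1_inv : forall (p q t a b : C) L M i j, (Cmod p < 1)%R ->
  q <> 0 -> t <> 0 -> b <> 0 ->
  H1 (Cinv q) p (Cinv t) (Cinv b) L M i j =
  Mono q t a b (M (j - 1)%nat - L j) (- (M (j - 1)%nat - L j)) 0 0 * H1 q p t b L M i j.
Proof.
  intros p q t a b L M i j Hp Hq Ht Hb. unfold H1. cbv beta zeta.
  rewrite !mon_inv1, !mon_invb by auto.
  rewrite !poch_inv by (auto; nz).
  set (m := (M (j - 1)%nat - L j)%Z).
  rewrite (mon_shift q t 1 (M i - M (j - 1)%nat) (Z.of_nat j - Z.of_nat i)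
             (M i - M (j - 1)%nat + 1) (Z.of_nat j - Z.of_nat i - 1)) by (auto; lia).
  rewrite (mon_shift q t b (L i + L j) (3 - Z.of_nat j - Z.of_nat i)
             (L i + L j + 1) (2 - Z.of_nat j - Z.of_nat i)) by (auto; lia).
  rewrite (mon_shift q t 1 (L i - M (j - 1)%nat) (Z.of_nat j - Z.of_nat i)
             (L i - M (j - 1)%nat + 1) (Z.of_nat j - Z.of_nat i - 1)) by (auto; lia).
  rewrite !Tf_scale by nz.
  unfold Mono, Cdiv. rewrite !Cinv_mult.
  gen_inv_poch.
  rewrite (zpow_mul_base q (Cinv t) (-m)) by nz. rewrite (zpow_inv_base t (-m)) by auto.
  rewrite (zpow_opp q m), (zpow_opp t m) by auto. simpl (zpow a 0). simpl (zpow b 0).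
  field. repeat split; nz.
Qed.

Lemma H2_inv : forall (p q t a b : C) L M i j, (Cmod p < 1)%R ->
  q <> 0 -> t <> 0 -> b <> 0 ->
  H2 (Cinv q) p (Cinv t) (Cinv b) L M i j =
  Mono q t a b (- (M (j - 1)%nat - L j)) (M (j - 1)%nat - L j) 0 0 * H2 q p t b L M i j.
Proof.
  intros p q t a b L M i j Hp Hq Ht Hb. unfold H2. cbv beta zeta.
  rewrite !mon_invb by auto.
  rewrite !poch_inv by (auto; nz).
  set (m := (M (j - 1)%nat - L j)%Z).
  rewrite (mon_shift q t b (M i + L j) (2 - Z.of_nat j - Z.of_nat i)
             (M i + L j + 1) (1 - Z.of_nat j - Z.of_nat i)) by (auto; lia).
  rewrite !Tf_scale by nz.
  unfold Mono, Cdiv. rewrite !Cinv_mult.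
  gen_inv_poch.
  rewrite (zpow_mul_base q (Cinv t) (-m)) by nz. rewrite (zpow_inv_base t (-m)) by auto.
  rewrite (zpow_opp q m) by auto. simpl (zpow a 0). simpl (zpow b 0).
  rewrite (zpow_opp t m) by auto. field. repeat split; nz.
Qed.

Definition mmf (lam mu : list nat) (j : nat) : Z := (part mu (j - 1)%nat - part lam j)%Z.

Lemma zsum_ext : forall lo hi f g, (forall i, f i = g i) -> zsum lo hi f = zsum lo hi g.
Proof. intros. unfold zsum. f_equal. apply map_ext. auto. Qed.


Lemma fold_add_lin : forall (f g : nat -> Z) (c d : Z) l,
  fold_right Z.add 0%Z (map (fun i => c * f i + d * g i)%Z l) =
  (c * fold_right Z.add 0%Z (map f l) + d * fold_right Z.add 0%Z (map g l))%Z.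
Proof. induction l; simpl; auto. ring. rewrite IHl. ring. Qed.

Lemma zsum_lin : forall lo hi (f g : nat -> Z) (c d : Z),
  zsum lo hi (fun i => c * f i + d * g i)%Z = (c * zsum lo hi f + d * zsum lo hi g)%Z.
Proof. intros. apply fold_add_lin. Qed.

Lemma zsum_0 : forall lo hi, zsum lo hi (fun _ => 0%Z) = 0%Z.
Proof.
  intros. unfold zsum. generalize (seq lo (S hi - lo)). induction l; simpl; auto.
Qed.

Lemma zsum_opp : forall lo hi f, zsum lo hi (fun i => - f i)%Z = (- zsum lo hi f)%Z.
Proof.
  intros. rewrite (zsum_ext lo hi _ (fun i => (-1) * f i + 0 * f i)%Z) by (intros; ring).
  rewrite zsum_lin. ring.
Qed.

Lemma Hcoef_inv : forall (p q t a b : C) lam mu, (Cmod p < 1)%R ->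
  q <> 0 -> t <> 0 -> a <> 0 -> b <> 0 ->
  let n := length lam in
  let EH := (zsum 1 n (fun i => zsum (S i) n (mmf lam mu))
             - zsum 1 n (fun i => zsum (S (S i)) (S n) (mmf lam mu)))%Z in
  Hcoef (Cinv q) p (Cinv t) (Cinv b) lam mu = Mono q t a b EH (- EH) 0 0 * Hcoef q p t b lam mu.
Proof.
  intros p q t a b lam mu Hp Hq Ht Ha Hb n EH.
  rewrite !Hcoef_eq. fold n.
  rewrite (cprod_range_ext 1 n
     (fun i => cprod_range (S i) n (fun j => H1 (Cinv q) p (Cinv t) (Cinv b) (part lam) (part mu) i j))
     (fun i => Mono q t a b (zsum (S i) n (mmf lam mu)) (zsum (S i) n (fun j => - mmf lam mu j)%Z)
                 (zsum (S i) n (fun _ => 0%Z)) (zsum (S i) n (fun _ => 0%Z)) *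
               cprod_range (S i) n (fun j => H1 q p t b (part lam) (part mu) i j))).
  2:{ intros i. rewrite (cprod_range_ext (S i) n _
        (fun j => Mono q t a b (mmf lam mu j) (- mmf lam mu j) 0 0 * H1 q p t b (part lam) (part mu) i j)).
      2:{ intros j. apply H1_inv; auto. }
      rewrite cprod_range_mult, cprod_range_Mono by auto. auto. }
  rewrite (cprod_range_ext 1 n
     (fun i => cprod_range (S (S i)) (S n) (fun j => H2 (Cinv q) p (Cinv t) (Cinv b) (part lam) (part mu) i j))
     (fun i => Mono q t a b (zsum (S (S i)) (S n) (fun j => - mmf lam mu j)%Z) (zsum (S (S i)) (S n) (mmf lam mu))
                 (zsum (S (S i)) (S n) (fun _ => 0%Z)) (zsum (S (S i)) (S n) (fun _ => 0%Z)) *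
               cprod_range (S (S i)) (S n) (fun j => H2 q p t b (part lam) (part mu) i j))).
  2:{ intros i. rewrite (cprod_range_ext (S (S i)) (S n) _
        (fun j => Mono q t a b (- mmf lam mu j) (mmf lam mu j) 0 0 * H2 q p t b (part lam) (part mu) i j)).
      2:{ intros j. apply H2_inv; auto. }
      rewrite cprod_range_mult, cprod_range_Mono by auto. auto. }
  rewrite !cprod_range_mult, !cprod_range_Mono by auto.
  rewrite <- !Cmult_assoc.
  rewrite (Cmult_comm (cprod_range _ _ _) (Cmult (Mono _ _ _ _ _ _ _ _) _)).
  rewrite <- !Cmult_assoc, !(Cmult_assoc (Mono _ _ _ _ _ _ _ _) (Mono _ _ _ _ _ _ _ _)).
  rewrite Mono_mult by auto.
  rewrite (Cmult_comm (cprod_range 1 n (fun i => cprod_range (S (S i)) (S n) _))).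
  f_equal.
  rewrite (zsum_ext 1 n (fun i => zsum (S (S i)) (S n) (fun j => - mmf lam mu j)%Z)
             (fun i => - zsum (S (S i)) (S n) (mmf lam mu))%Z) by (intros; apply zsum_opp).
  rewrite (zsum_ext 1 n (fun i => zsum (S i) n (fun j => - mmf lam mu j)%Z)
             (fun i => - zsum (S i) n (mmf lam mu))%Z) by (intros; apply zsum_opp).
  rewrite (zsum_ext 1 n (fun i => zsum (S i) n (fun _ => 0%Z)) (fun _ => 0%Z)) by (intros; apply zsum_0).
  rewrite (zsum_ext 1 n (fun i => zsum (S (S i)) (S n) (fun _ => 0%Z)) (fun _ => 0%Z)) by (intros; apply zsum_0).
  rewrite !zsum_opp, !zsum_0. unfold EH. f_equal; ring.
Qed.

Definition TT (q t A : C) (lam : list nat) : C :=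
  cprod_range 1 (length lam) (fun i => Tf q (A * zpow t (1 - Z.of_nat i)) (part lam i)).

Lemma PP_inv : forall (p q t A : C) lam, (Cmod p < 1)%R -> q <> 0 -> t <> 0 -> A <> 0 ->
  poch_part p (Cinv q) (Cinv t) (Cinv A) lam = TT q t A lam * poch_part p q t A lam.
Proof.
  intros p q t A lam Hp Hq Ht HA. unfold poch_part, TT.
  rewrite <- cprod_range_mult. apply cprod_range_ext. intros i.
  rewrite zpow_inv_base, <- Cinv_mult by auto. apply poch_inv; auto. nz.
Qed.

Lemma TT_scale : forall (q t c A : C) lam, t <> 0 -> c <> 0 -> A <> 0 ->
  TT q t (c * A) lam = zpow c (- zsum 1 (length lam) (part lam)) * TT q t A lam.
Proof.
  intros q t c A lam Ht Hc HA. unfold TT.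
  rewrite (cprod_range_ext 1 (length lam) _
    (fun i => zpow c (- part lam i) * Tf q (A * zpow t (1 - Z.of_nat i)) (part lam i))).
  2:{ intros i. rewrite <- Cmult_assoc. apply Tf_scale; nz. }
  rewrite cprod_range_mult, cprod_range_zpow, zsum_opp by auto. auto.
Qed.

Lemma TT_nz : forall (q t A : C) lam, q <> 0 -> t <> 0 -> A <> 0 -> TT q t A lam <> 0.
Proof.
  intros. unfold TT, cprod_range. generalize (seq 1 (S (length lam) - 1)).
  induction l; simpl. apply C1_nz. apply Cmult_nz; auto. nz.
Qed.

Definition RatPP (x q p t a b : C) (lam mu : list nat) : C :=
    let PP := poch_part p q t in
      (Cdiv (Cmult (Cmult (PP (Cinv x) lam) (PP (Cmult a x) lam))
                   (Cmult (PP (Cdiv (Cmult (Cmult q b) x) t) mu)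
                          (PP (Cdiv (Cmult q b) (Cmult (Cmult a x) t)) mu)))
            (Cmult (Cmult (PP (Cinv x) mu) (PP (Cmult a x) mu))
                   (Cmult (PP (Cmult (Cmult q b) x) lam)
                          (PP (Cdiv (Cmult q b) (Cmult a x)) lam)))).

Ltac gen_inv_pp :=
  repeat match goal with |- context [Cinv (poch_part ?a ?b ?c ?d ?e)] =>
    generalize (Cinv (poch_part a b c d e)); intro end.

Lemma RatPP_inv : forall (x p q t a b : C) lam mu, (Cmod p < 1)%R ->
  x <> 0 -> q <> 0 -> t <> 0 -> a <> 0 -> b <> 0 ->
  let sl := zsum 1 (length lam) (part lam) in
  let sm := zsum 1 (length mu) (part mu) in
  RatPP (Cinv x) (Cinv q) p (Cinv t) (Cinv a) (Cinv b) lam mu =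
  Cinv (zpow (q * b * Cinv a) (- sl) * zpow (q * b * Cinv a) (- sl)) *
  (zpow (q * b * Cinv (a * t)) (- sm) * zpow (q * b * Cinv (a * t)) (- sm)) *
  RatPP x q p t a b lam mu.
Proof.
  intros x p q t a b lam mu Hp Hx Hq Ht Ha Hb sl sm. unfold RatPP. cbv beta zeta.
  replace (Cdiv (Cmult (Cinv q) (Cinv b)) (Cmult (Cmult (Cinv a) (Cinv x)) (Cinv t)))
    with (Cinv (Cdiv (Cmult q b) (Cmult (Cmult a x) t))) by (unfold Cdiv; rewrite !Cinv_mult, !Cinv_inv; auto).
  replace (Cdiv (Cmult (Cinv q) (Cinv b)) (Cmult (Cinv a) (Cinv x)))
    with (Cinv (Cdiv (Cmult q b) (Cmult a x))) by (unfold Cdiv; rewrite !Cinv_mult, !Cinv_inv; auto).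
  replace (Cdiv (Cmult (Cmult (Cinv q) (Cinv b)) (Cinv x)) (Cinv t))
    with (Cinv (Cdiv (Cmult (Cmult q b) x) t)) by (unfold Cdiv; rewrite !Cinv_mult, !Cinv_inv; auto).
  replace (Cmult (Cmult (Cinv q) (Cinv b)) (Cinv x))
    with (Cinv (Cmult (Cmult q b) x)) by (rewrite !Cinv_mult; auto).
  replace (Cmult (Cinv a) (Cinv x)) with (Cinv (Cmult a x)) by apply Cinv_mult.
  rewrite !PP_inv by (auto; unfold Cdiv; nz).
  replace (Cdiv (Cmult (Cmult q b) x) t) with ((q * b * Cinv (a * t)) * (a * x)) by (field; auto).
  replace (Cdiv (Cmult q b) (Cmult (Cmult a x) t)) with ((q * b * Cinv (a * t)) * Cinv x) by (field; auto).
  replace (Cmult (Cmult q b) x) with ((q * b * Cinv a) * (a * x)) by (field; auto).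
  replace (Cdiv (Cmult q b) (Cmult a x)) with ((q * b * Cinv a) * Cinv x) by (field; auto).
  assert (Hc1 : q * b * Cinv a <> 0) by nz.
  assert (Hc2 : q * b * Cinv (a * t) <> 0) by nz.
  set (c1 := q * b * Cinv a) in *. set (c2 := q * b * Cinv (a * t)) in *.
  assert (Hax : a * x <> 0) by nz. assert (Hix : Cinv x <> 0) by nz.
  set (ax := a * x) in *. set (ix := Cinv x) in *.
  rewrite (TT_scale q t c1 ax lam), (TT_scale q t c1 ix lam),
          (TT_scale q t c2 ax mu), (TT_scale q t c2 ix mu) by auto.
  fold sl sm.
  pose proof (TT_nz q t ax lam Hq Ht Hax). pose proof (TT_nz q t ix lam Hq Ht Hix).
  pose proof (TT_nz q t ax mu Hq Ht Hax). pose proof (TT_nz q t ix mu Hq Ht Hix).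
  unfold Cdiv. rewrite !Cinv_mult. gen_inv_pp.
  field. repeat split; nz.
Qed.


Definition Prod1 (q p t b : C) (lam mu : list nat) (i : nat) : C :=
       let zi := Z.of_nat i in
       let bt := Cmult b (zpow t (1 - 2 * zi)) in
       let s := (part mu i + part lam (S i))%Z in
       Cmult (Cmult
         (Cdiv (Eth p (Cmult bt (zpow q (2 * part mu i)))) (Eth p bt))
         (Cdiv (poch p q bt s)
               (poch p q (Cmult (Cmult b q) (zpow t (- 2 * zi))) s)))
         (zpow t (zi * (part mu i - part lam (S i)))).

Ltac gen_inv_eth :=
  repeat match goal with |- context [Cinv (Eth ?a ?b)] =>
    generalize (Cinv (Eth a b)); intro end.

Lemma Prod1_inv : forall (p q t a b : C) lam mu i, (Cmod p < 1)%R ->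
  q <> 0 -> t <> 0 -> b <> 0 ->
  let s := (part mu i + part lam (S i))%Z in
  let e := (Z.of_nat i * (part mu i - part lam (S i)))%Z in
  Prod1 (Cinv q) p (Cinv t) (Cinv b) lam mu i =
  Mono q t a b (- 2 * part mu i + s) (- s - 2 * e) 0 0 * Prod1 q p t b lam mu i.
Proof.
  intros p q t a b lam mu i Hp Hq Ht Hb s e. unfold Prod1. cbv beta zeta. fold s.
  replace (Cmult (Cinv b) (zpow (Cinv t) (1 - 2 * Z.of_nat i)))
    with (Cinv (Cmult b (zpow t (1 - 2 * Z.of_nat i)))) by (rewrite zpow_inv_base, Cinv_mult; auto).
  replace (Cmult (Cmult (Cinv b) (Cinv q)) (zpow (Cinv t) (- 2 * Z.of_nat i)))
    with (Cinv (Cmult (Cmult b q) (zpow t (- 2 * Z.of_nat i)))) by (rewrite zpow_inv_base, !Cinv_mult; auto).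
  assert (Hbt : Cmult b (zpow t (1 - 2 * Z.of_nat i)) <> 0) by nz.
  set (bt := Cmult b (zpow t (1 - 2 * Z.of_nat i))) in *.
  replace (Cmult (Cinv bt) (zpow (Cinv q) (2 * part mu i)))
    with (Cinv (Cmult bt (zpow q (2 * part mu i)))) by (rewrite zpow_inv_base, !Cinv_mult; auto).
  rewrite !Eth_inv by (auto; nz).
  rewrite !poch_inv by (auto; nz).
  replace (Cmult (Cmult b q) (zpow t (- 2 * Z.of_nat i))) with ((q * Cinv t) * bt).
  2:{ unfold bt. replace (1 - 2 * Z.of_nat i)%Z with (- 2 * Z.of_nat i + 1)%Z by lia.
      rewrite zpow_succ by auto. field. auto. }
  rewrite Tf_scale by nz.
  rewrite (zpow_inv_base t) by auto.
  unfold Mono, Cdiv. rewrite !Cinv_mult. gen_inv_eth. gen_inv_poch.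
  fold e.
  rewrite (zpow_mul_base q (Cinv t) (-s)), (zpow_inv_base t (-s)) by nz.
  replace (-2 * part mu i + s)%Z with (- (2 * part mu i) + s)%Z by ring.
  replace (- s - 2 * e)%Z with (- s + (- e + - e))%Z by ring.
  rewrite !zpow_add by auto.
  rewrite !(zpow_opp t), !(zpow_opp q) by auto.
  simpl (zpow a 0). simpl (zpow b 0).
  field. repeat split; nz.
Qed.


Lemma zsum_ext_in : forall lo hi f g, (forall i, (lo <= i <= hi)%nat -> f i = g i) ->
  zsum lo hi f = zsum lo hi g.
Proof.
  intros. unfold zsum. f_equal. apply map_ext_in. intros i Hi. apply in_seq in Hi. apply H. lia.
Qed.

Lemma zsum_add : forall lo hi f g, zsum lo hi (fun i => f i + g i)%Z = (zsum lo hi f + zsum lo hi g)%Z.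
Proof.
  intros. unfold zsum. generalize (seq lo (S hi - lo)). induction l; simpl; auto. rewrite IHl. ring.
Qed.

Lemma zsum_scal : forall lo hi c f, zsum lo hi (fun i => c * f i)%Z = (c * zsum lo hi f)%Z.
Proof.
  intros. unfold zsum. generalize (seq lo (S hi - lo)). induction l; simpl; auto. ring. rewrite IHl. ring.
Qed.

Lemma zsum_sub : forall lo hi f g, zsum lo hi (fun i => f i - g i)%Z = (zsum lo hi f - zsum lo hi g)%Z.
Proof.
  intros. rewrite (zsum_ext lo hi _ (fun i => f i + (-1) * g i)%Z) by (intros; ring).
  rewrite zsum_add, zsum_scal. ring.
Qed.

Lemma zsum_const : forall lo hi c, zsum lo hi (fun _ => c) = (Z.of_nat (S hi - lo) * c)%Z.
Proof.
  intros. unfold zsum. remember (S hi - lo)%nat as k. clear Heqk. revert lo.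
  induction k as [|k IHk]; intros l0; cbn [seq map fold_right].
  lia. rewrite IHk. lia.
Qed.

Lemma zsum_empty : forall hi f, zsum (S hi) hi f = 0%Z.
Proof. intros. unfold zsum. replace (S hi - S hi)%nat with 0%nat by lia. auto. Qed.

Lemma zsum_first : forall lo hi f, (lo <= hi)%nat -> zsum lo hi f = (f lo + zsum (S lo) hi f)%Z.
Proof.
  intros. unfold zsum. replace (S hi - lo)%nat with (S (S hi - S lo)) by lia. auto.
Qed.

Lemma zsum_last : forall lo hi f, (lo <= S hi)%nat -> zsum lo (S hi) f = (zsum lo hi f + f (S hi))%Z.
Proof.
  intros. unfold zsum. replace (S (S hi) - lo)%nat with (S (S hi - lo)) by lia.
  rewrite seq_S, map_app, fold_right_app. cbn [map fold_right].
  replace (lo + (S hi - lo))%nat with (S hi) by lia.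
  generalize (map f (seq lo (S hi - lo))). intro l. induction l as [|x l IHl]; cbn [fold_right]. lia. rewrite IHl. lia.
Qed.

Lemma zsum_shift : forall lo hi f, zsum lo hi (fun i => f (S i)) = zsum (S lo) (S hi) f.
Proof.
  intros. unfold zsum. replace (S (S hi) - S lo)%nat with (S hi - lo)%nat by lia.
  rewrite <- seq_shift, map_map. auto.
Qed.

Lemma W1_eq : forall x q p t a b lam mu,
  W1 x q p t a b lam mu =
  if interlaces lam mu then
    Cmult (Cmult (Hcoef q p t b lam mu) (RatPP x q p t a b lam mu))
          (cprod_range 1 (length lam) (Prod1 q p t b lam mu))
  else RtoC 0.
Proof. reflexivity. Qed.

Lemma Mono_inv : forall (q t a b : C) e1 e2 e3 e4, q <> 0 -> t <> 0 -> a <> 0 -> b <> 0 ->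
  Cinv (Mono q t a b e1 e2 e3 e4) = Mono q t a b (- e1) (- e2) (- e3) (- e4).
Proof. intros. unfold Mono. rewrite !Cinv_mult, !zpow_opp by auto. auto. Qed.

Lemma zpow_c1 : forall (q t a b : C) k, q <> 0 -> t <> 0 -> a <> 0 -> b <> 0 ->
  zpow (q * b * Cinv a) k = Mono q t a b k 0 (- k) k.
Proof.
  intros. unfold Mono. rewrite !zpow_mul_base, zpow_inv_base, zpow_opp by nz. simpl (zpow t 0). ring.
Qed.

Lemma zpow_c2 : forall (q t a b : C) k, q <> 0 -> t <> 0 -> a <> 0 -> b <> 0 ->
  zpow (q * b * Cinv (a * t)) k = Mono q t a b k (- k) (- k) k.
Proof.
  intros. unfold Mono. rewrite !zpow_mul_base, zpow_inv_base, !zpow_mul_base, !zpow_opp by nz. rewrite Cinv_mult. ring.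
Qed.

Lemma interlaces_length : forall lam mu, interlaces lam mu = true -> length lam = length mu.
Proof.
  intros lam mu H. unfold interlaces in H. apply andb_prop in H. destruct H as [H _].
  apply Nat.eqb_eq; auto.
Qed.

Lemma zsum_lin4 : forall lo hi (c1 c2 c3 c4 : Z) f1 f2 f3 f4,
  zsum lo hi (fun i => c1 * f1 i + c2 * f2 i + c3 * f3 i + c4 * f4 i)%Z =
  (c1 * zsum lo hi f1 + c2 * zsum lo hi f2 + c3 * zsum lo hi f3 + c4 * zsum lo hi f4)%Z.
Proof.
  intros. unfold zsum. generalize (seq lo (S hi - lo)). intro l.
  induction l as [|x l IHl]; cbn [map fold_right]. ring. rewrite IHl. ring.
Qed.

Lemma part_overflow : forall lam k, (length lam < k)%nat -> part lam k = 0%Z.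
Proof.
  intros. unfold part. rewrite nth_overflow by lia. auto.
Qed.

Lemma Mono_ext : forall (q t a b : C) e1 e2 e3 e4 f1 f2 f3 f4,
  e1 = f1 -> e2 = f2 -> e3 = f3 -> e4 = f4 -> Mono q t a b e1 e2 e3 e4 = Mono q t a b f1 f2 f3 f4.
Proof. intros; subst; auto. Qed.

Lemma EH_step : forall f i n, (i <= n)%nat ->
  (zsum (S i) n f - zsum (S (S i)) (S n) f = f (S i) - f (S n))%Z.
Proof.
  intros f i n Hi. destruct (Nat.eq_dec i n) as [->|Hne].
  - rewrite !zsum_empty. ring.
  - rewrite (zsum_first (S i) n) by lia. rewrite (zsum_last (S (S i)) n) by lia. ring.
Qed.

Lemma EH_simpl : forall lam mu, length mu = length lam ->
  let n := length lam in
  (zsum 1 n (fun i => zsum (S i) n (mmf lam mu)) - zsum 1 n (fun i => zsum (S (S i)) (S n) (mmf lam mu))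
   = zsum 1 n (part mu) - zsum 1 n (fun i => part lam (S i)) - Z.of_nat n * part mu n)%Z.
Proof.
  intros lam mu Hlen n. rewrite <- zsum_sub.
  rewrite (zsum_ext_in 1 n _ (fun i => part mu i - part lam (S i) - part mu n)%Z).
  2:{ intros i Hi. rewrite EH_step by lia. unfold mmf.
      replace (S i - 1)%nat with i by lia. replace (S n - 1)%nat with n by lia.
      rewrite (part_overflow lam (S n)) by (unfold n; lia). ring. }
  rewrite zsum_sub, zsum_sub, zsum_const. replace (S n - 1)%nat with n by lia. ring.
Qed.

Lemma pl_shift : forall lam, let n := length lam in
  zsum 1 n (fun i => Z.of_nat i * part lam (S i))%Z = zsum 1 n (fun i => Z.of_nat (i - 1) * part lam i)%Z.
Proof.
  intros lam n.
  set (g := fun j => (Z.of_nat (j - 1) * part lam j)%Z).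
  rewrite (zsum_ext 1 n _ (fun i => g (S i))).
  2:{ intros i. unfold g. replace (S i - 1)%nat with i by lia. auto. }
  rewrite zsum_shift. fold g.
  destruct n as [|n'] eqn:En.
  - rewrite !zsum_empty. auto.
  - rewrite zsum_last by lia. rewrite (zsum_first 1 (S n')) by lia.
    unfold g at 2 3. rewrite (part_overflow lam (S (S n'))) by lia.
    replace (1 - 1)%nat with 0%nat by lia. ring.
Qed.

Lemma W1_inv : forall (x p q t a b : C) lam mu, (Cmod p < 1)%R ->
  x <> 0 -> q <> 0 -> t <> 0 -> a <> 0 -> b <> 0 ->
  let n := length lam in
  let sl := zsum 1 n (part lam) in
  let sm := zsum 1 n (part mu) in
  let pl := zsum 1 n (fun i => Z.of_nat (i - 1) * part lam i)%Z in
  let pm := zsum 1 n (fun i => Z.of_nat (i - 1) * part mu i)%Z in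
  W1 (Cinv x) (Cinv q) p (Cinv t) (Cinv a) (Cinv b) lam mu =
  Mono q t a b (2 * sl - 2 * sm - Z.of_nat n * part mu n)
               (2 * pl - 2 * pm - 2 * sm + Z.of_nat n * part mu n)
               (- 2 * sl + 2 * sm) (2 * sl - 2 * sm) *
  W1 x q p t a b lam mu.
Proof.
  intros x p q t a b lam mu Hp Hx Hq Ht Ha Hb n sl sm pl pm.
  rewrite !W1_eq. destruct (interlaces lam mu) eqn:Hi; [|ring].
  pose proof (interlaces_length _ _ Hi) as Hlen.
  rewrite (Hcoef_inv p q t a b) by auto.
  rewrite RatPP_inv by auto. rewrite <- Hlen. fold n sl sm.
  rewrite (cprod_range_ext 1 n (Prod1 (Cinv q) p (Cinv t) (Cinv b) lam mu)
     (fun i => Mono q t a b (- 2 * part mu i + (part mu i + part lam (S i)))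
                 (- (part mu i + part lam (S i)) - 2 * (Z.of_nat i * (part mu i - part lam (S i)))) 0 0
               * Prod1 q p t b lam mu i)) by (intros; apply Prod1_inv; auto).
  rewrite cprod_range_mult, cprod_range_Mono by auto.
  rewrite !(zpow_c1 q t a b), !(zpow_c2 q t a b), Cinv_mult, !Mono_inv by auto.
  set (HH := Hcoef q p t b lam mu). set (RR := RatPP x q p t a b lam mu).
  set (PP := cprod_range 1 n (Prod1 q p t b lam mu)).
  match goal with |- ?M1 * ?H * (?M2 * ?M3 * (?M4 * ?M5) * ?R) * (?M6 * ?P) = ?MT * _ =>
    transitivity ((M1 * M2 * M3 * M4 * M5 * M6) * (H * R * P)); [ring|] end.
  rewrite !Mono_mult by auto.
  pose proof (EH_simpl lam mu (eq_sym Hlen)) as HE. cbv zeta in HE. fold n in HE.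
  pose proof (pl_shift lam) as HPL. cbv zeta in HPL. fold n in HPL. fold pl in HPL.
  f_equal. apply Mono_ext.
  - rewrite HE.
    rewrite (zsum_ext 1 n (fun i => (-2 * part mu i + (part mu i + part lam (S i)))%Z)
       (fun i => (-1) * part mu i + 1 * part lam (S i) + 0 * part mu i + 0 * part mu i)%Z) by (intros; ring).
    rewrite zsum_lin4. fold sm. ring.
  - rewrite HE.
    rewrite (zsum_ext 1 n (fun i => (- (part mu i + part lam (S i)) - 2 * (Z.of_nat i * (part mu i - part lam (S i))))%Z)
       (fun i => (-1) * part mu i + (-1) * part lam (S i) + (-2) * (Z.of_nat i * part mu i) + 2 * (Z.of_nat i * part lam (S i)))%Z) by (intros; ring).
    rewrite zsum_lin4. fold sm.
    rewrite HPL.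
    assert (Hpm : pm = (zsum 1 n (fun i => Z.of_nat i * part mu i) - sm)%Z).
    { unfold pm, sm. rewrite <- zsum_sub. apply zsum_ext_in. intros i Hi2.
      replace (Z.of_nat (i - 1)) with (Z.of_nat i - 1)%Z by lia. ring. }
    rewrite Hpm. ring.
  - rewrite zsum_0. ring.
  - rewrite zsum_0. ring.
Qed.

Lemma interlacing_below_length : forall lam nu, In nu (interlacing_below lam) -> length nu = length lam.
Proof.
  induction lam as [|l rest IH]; intros nu Hin; simpl in Hin.
  - destruct Hin as [<-|[]]. auto.
  - apply in_flat_map in Hin. destruct Hin as [v [_ Hv]].
    apply in_map_iff in Hv. destruct Hv as [r [<- Hr]]. simpl. rewrite (IH r Hr). auto.
Qed.

Lemma part_nonneg : forall lam k, (0 <= part lam k)%Z.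
Proof. intros. unfold part. lia. Qed.

Lemma part_repeat0 : forall n k, part (repeat 0%nat n) k = 0%Z.
Proof. intros. unfold part. rewrite nth_repeat. auto. Qed.

Lemma interlaces_get : forall lam mu, interlaces lam mu = true ->
  forall i, (1 <= i <= length lam)%nat ->
  (part mu i <= part lam i /\ part lam (S i) <= part mu i)%Z.
Proof.
  intros lam mu H i Hi. unfold interlaces in H. apply andb_prop in H. destruct H as [_ H].
  rewrite forallb_forall in H. specialize (H i). rewrite in_seq in H.
  assert (Hb : (Z.leb (part mu i) (part lam i) && Z.leb (part lam (S i)) (part mu i))%bool = true)
    by (apply H; lia).
  apply andb_prop in Hb. destruct Hb as [H1 H2]. apply Z.leb_le in H1, H2. auto.
Qed.

Lemma csuml_zero : forall (A : Type) (f : A -> C) l, (forall x, In x l -> f x = 0) -> csuml (map f l) = 0.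
Proof.
  induction l; intros H; simpl. auto. rewrite H by (left; auto). rewrite IHl. ring.
  intros; apply H; right; auto.
Qed.

Lemma csuml_scal : forall (A : Type) (c : C) (g : A -> C) l,
  csuml (map (fun x => c * g x) l) = c * csuml (map g l).
Proof. induction l; simpl. ring. rewrite IHl. ring. Qed.

Lemma Wm_cons2 : forall y z zs q p t a b lam mu,
  Wm (y :: z :: zs) q p t a b lam mu =
  csuml (map (fun nu =>
        Cmult (W1 (Cmult y (zpow t (- Z.of_nat (length (z :: zs))))) q p t
                  (Cmult a (zpow t (2 * Z.of_nat (length (z :: zs)))))
                  (Cmult b (zpow t (Z.of_nat (length (z :: zs))))) lam nu)
              (Wm (z :: zs) q p t a b nu mu))
        (interlacing_below lam)).
Proof. reflexivity. Qed.

Lemma Wm_vanish : forall zs nu q p t a b k, (length zs < k)%nat -> (k <= length nu)%nat ->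
  part nu k <> 0%Z -> Wm zs q p t a b nu (repeat 0%nat (length nu)) = 0.
Proof.
  induction zs as [|y zs IH]; intros nu q p t a b k Hk Hkn Hnz.
  - simpl. destruct (list_eq_dec Nat.eq_dec nu (repeat 0%nat (length nu))) as [E|E]; auto.
    exfalso. apply Hnz. rewrite E. apply part_repeat0.
  - destruct zs as [|z zs'].
    + simpl Wm. rewrite W1_eq. destruct (interlaces nu (repeat 0%nat (length nu))) eqn:Hi; auto.
      exfalso. simpl in Hk.
      destruct (interlaces_get _ _ Hi (k - 1)) as [_ H2]. lia.
      rewrite part_repeat0 in H2. replace (S (k - 1)) with k in H2 by lia.
      pose proof (part_nonneg nu k). lia.
    + rewrite Wm_cons2. apply csuml_zero. intros rho Hrho.
      pose proof (interlacing_below_length _ _ Hrho) as Hlr.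
      rewrite W1_eq. destruct (interlaces nu rho) eqn:Hi.
      * destruct (interlaces_get _ _ Hi (k - 1)) as [_ H2]. simpl in Hk. lia.
        replace (S (k - 1)) with k in H2 by lia.
        rewrite <- Hlr. rewrite (IH rho q p t a b (k - 1)%nat); [ring | simpl in *; lia | lia |].
        pose proof (part_nonneg nu k). lia.
      * ring.
Qed.

Lemma Mono_shift : forall (q t a b : C) (L : Z) e1 e2 e3 e4, q <> 0 -> t <> 0 -> a <> 0 -> b <> 0 ->
  Mono q t (a * zpow t (2 * L)) (b * zpow t L) e1 e2 e3 e4 =
  Mono q t a b e1 (e2 + 2 * L * e3 + L * e4) e3 e4.
Proof.
  intros. unfold Mono. rewrite !zpow_mul_base, !zpow_zpow, !zpow_add by nz. ring.
Qed.

Lemma zsum_repeat0 : forall n m, zsum 1 n (part (repeat 0%nat m)) = 0%Z.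
Proof.
  intros. rewrite (zsum_ext 1 n _ (fun _ => 0%Z)) by (intros; apply part_repeat0). apply zsum_0.
Qed.

Lemma zsum_repeat0' : forall n m, zsum 1 n (fun i => Z.of_nat (i - 1) * part (repeat 0%nat m) i)%Z = 0%Z.
Proof.
  intros. rewrite (zsum_ext 1 n _ (fun _ => 0%Z)) by (intros; rewrite part_repeat0; ring). apply zsum_0.
Qed.

Lemma Wm_inv : forall zs lam (p q t a b : C), (Cmod p < 1)%R ->
  q <> 0 -> t <> 0 -> a <> 0 -> b <> 0 ->
  List.Forall (fun x : C => x <> 0) zs -> zs <> [] -> (length zs <= length lam)%nat ->
  let n := length lam in
  let sl := zsum 1 n (part lam) in
  let pl := zsum 1 n (fun i => Z.of_nat (i - 1) * part lam i)%Z in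
  Wm (map Cinv zs) (Cinv q) p (Cinv t) (Cinv a) (Cinv b) lam (repeat 0%nat n) =
  Mono q t a b (2 * sl) (2 * pl - 2 * (Z.of_nat (length zs) - 1) * sl) (- 2 * sl) (2 * sl) *
  Wm zs q p t a b lam (repeat 0%nat n).
Proof.
  induction zs as [|y zs IH]; intros lam p q t a b Hp Hq Ht Ha Hb Hnz Hne Hlen n sl pl.
  - exfalso; auto.
  - inversion Hnz as [|y' zs' Hy Hzs]; subst.
    destruct zs as [|z zs'].
    + simpl map. simpl Wm. rewrite W1_inv by auto.
      fold n. rewrite zsum_repeat0, zsum_repeat0', part_repeat0.
      fold sl pl. f_equal. apply Mono_ext; simpl; ring.
    + simpl map. rewrite !Wm_cons2. rewrite <- csuml_scal.
      f_equal. apply map_ext_in. intros nu Hnu.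
      pose proof (interlacing_below_length _ _ Hnu) as Hln.
      replace (length (Cinv z :: map Cinv zs')) with (length (z :: zs')) by (simpl; rewrite length_map; auto).
      set (L := Z.of_nat (length (z :: zs'))).
      replace (Cmult (Cinv y) (zpow (Cinv t) (- L))) with (Cinv (Cmult y (zpow t (- L))))
        by (rewrite zpow_inv_base, Cinv_mult; auto).
      replace (Cmult (Cinv a) (zpow (Cinv t) (2 * L))) with (Cinv (Cmult a (zpow t (2 * L))))
        by (rewrite zpow_inv_base, Cinv_mult; auto).
      replace (Cmult (Cinv b) (zpow (Cinv t) L)) with (Cinv (Cmult b (zpow t L)))
        by (rewrite zpow_inv_base, Cinv_mult; auto).
      rewrite W1_inv by (auto; nz).
      fold n sl pl.
      unfold n. rewrite <- Hln. change (Cinv z :: map Cinv zs') with (map Cinv (z :: zs')).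
      assert (Hl2 : (length (z :: zs') <= length nu)%nat) by (rewrite Hln; simpl in *; lia).
      destruct (Z.eq_dec (part nu (length lam)) 0) as [H0|H0].
      * rewrite (IH nu p q t a b) by (auto; discriminate).
        rewrite Hln, H0. fold n sl pl.
        rewrite Mono_shift by auto.
        set (sn := zsum 1 n (part nu)).
        set (pn' := zsum 1 n (fun i => Z.of_nat (i - 1) * part nu i)%Z).
        set (W1o := W1 _ q p t _ _ lam nu). set (Wmo := Wm (z :: zs') q p t a b nu _).
        transitivity (Mono q t a b
          (2 * sl - 2 * sn - Z.of_nat n * 0)
          (2 * pl - 2 * pn' - 2 * sn + Z.of_nat n * 0 + 2 * L * (-2 * sl + 2 * sn) + L * (2 * sl - 2 * sn))
          (-2 * sl + 2 * sn) (2 * sl - 2 * sn) *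
          Mono q t a b (2 * sn) (2 * pn' - 2 * (L - 1) * sn) (-2 * sn) (2 * sn) * (W1o * Wmo)).
        { fold L. ring. }
        rewrite Mono_mult by auto. f_equal. apply Mono_ext; try ring.
        unfold L. simpl length. rewrite !Nat2Z.inj_succ. ring.
      *
        rewrite (Wm_vanish (map Cinv (z :: zs')) nu (Cinv q) p (Cinv t) (Cinv a) (Cinv b) (length lam))
          by (try rewrite length_map; simpl in *; lia).
        rewrite (Wm_vanish (z :: zs') nu q p t a b (length lam)) by (simpl in *; lia).
        ring.
Qed.

Lemma psize_zsum : forall lam, psize lam = zsum 1 (length lam) (part lam).
Proof.
  induction lam as [|x l IH].
  - simpl. rewrite zsum_empty. auto.
  - simpl length. rewrite zsum_first by lia. rewrite <- zsum_shift.
    rewrite (zsum_ext_in 1 (length l) (fun i => part (x :: l) (S i)) (part l)).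
    2:{ intros i Hi. unfold part. destruct i as [|i]; [lia|]. simpl. rewrite Nat.sub_0_r. auto. }
    rewrite <- IH. unfold psize. simpl. unfold part. simpl. lia.
Qed.

Lemma pn_zsum : forall lam, pn lam = zsum 1 (length lam) (fun i => Z.of_nat (i - 1) * part lam i)%Z.
Proof.
  intros. unfold pn, zsum. replace (S (length lam) - 1)%nat with (length lam) by lia. auto.
Qed.

Local Close Scope C_scope.

Theorem mainTheorem9 (n : nat) (lam : list nat) (xs : list C) (q p t a b : C) :
  length lam = n -> is_partition lam ->
  length xs = n ->
  (Cmod p < 1)%R ->
  q <> RtoC 0 -> t <> RtoC 0 -> a <> RtoC 0 -> b <> RtoC 0 ->
  List.Forall (fun x => x <> RtoC 0) xs ->
  generic p q t a b xs ->
  Wpart (map Cinv xs) (Cinv q) p (Cinv t) (Cinv a) (Cinv b) lam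
  = Cmult (Cmult (Cmult (Cmult
      (zpow a (-2 * psize lam)) (zpow b (2 * psize lam)))
      (zpow q (2 * psize lam)))
      (zpow t (2 * pn lam - 2 * (Z.of_nat n - 1) * psize lam)))
    (Wpart xs q p t a b lam).
Proof.
  intros Hlen _ Hxs Hp Hq Ht Ha Hb Hnz _.
  unfold Wpart. subst n.
  destruct xs as [|x xs'].
  - destruct lam; [|simpl in Hxs; discriminate]. simpl. ring.
  - rewrite (Wm_inv (x :: xs') lam p q t a b) by (auto; try discriminate; lia).
    rewrite psize_zsum, pn_zsum, Hxs. unfold Mono. ring.
Qed.
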